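(* For every finite point set $P$ in general position, the graph $G_\bigtriangledown(P)\cap G_\bigtriangleup(P)$ (vertex set $P$, edge set the intersection of the edge sets) is connected.
   Context: A finite point set $P$ in the plane is in general position if no line through two points of $P$ makes an angle of $0^\circ$, $60^\circ$ or $120^\circ$ with the horizontal. A down-triangle (resp. up-triangle) is an equilateral triangle with one side parallel to the $x$-axis and the corner opposite to this side below (resp. above) that side. $G_\bigtriangledown(P)$ (resp. $G_\bigtriangleup(P)$) is the graph with vertex set $P$ in which $p,q$ are adjacent iff some (closed) down-triangle (resp. up-triangle) contains $p$ and $q$ and no other point of $P$. *)

(* Defs.v *)
From Stdlib Require Import Reals List Relations.
Open Scope R_scope.

Definition point : Type := (R * R)%type.

(* General position: no line through two distinct points of P makes an angle
   of 0, 60 or 120 degrees with the horizontal, i.e. the direction q - p is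
   neither horizontal nor of slope +sqrt 3 / -sqrt 3. *)
Definition general_position (P : list point) : Prop :=
  forall p q, In p P -> In q P -> p <> q ->
    snd q - snd p <> 0 /\
    snd q - snd p <> sqrt 3 * (fst q - fst p) /\
    snd q - snd p <> - sqrt 3 * (fst q - fst p).

(* Closed down-triangle with lower apex (x0,y0) and height h > 0:
   horizontal top side at y = y0 + h, the two other sides making angles of
   60 and 120 degrees with the horizontal through the apex below. *)
Definition in_down_triangle (x0 y0 h : R) (r : point) : Prop :=
  snd r <= y0 + h /\ sqrt 3 * Rabs (fst r - x0) <= snd r - y0.

(* Closed up-triangle with upper apex (x0,y0) and height h > 0. *)
Definition in_up_triangle (x0 y0 h : R) (r : point) : Prop :=
  y0 - h <= snd r /\ sqrt 3 * Rabs (fst r - x0) <= y0 - snd r.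

Definition G_down_adj (P : list point) (p q : point) : Prop :=
  In p P /\ In q P /\ p <> q /\
  exists x0 y0 h, 0 < h /\
    in_down_triangle x0 y0 h p /\ in_down_triangle x0 y0 h q /\
    forall r, In r P -> in_down_triangle x0 y0 h r -> r = p \/ r = q.

Definition G_up_adj (P : list point) (p q : point) : Prop :=
  In p P /\ In q P /\ p <> q /\
  exists x0 y0 h, 0 < h /\
    in_up_triangle x0 y0 h p /\ in_up_triangle x0 y0 h q /\
    forall r, In r P -> in_up_triangle x0 y0 h r -> r = p \/ r = q.

Definition G_cap_adj (P : list point) (p q : point) : Prop :=
  G_down_adj P p q /\ G_up_adj P p q.

Definition graph_connected (P : list point) (e : point -> point -> Prop) : Prop :=
  forall p q, In p P -> In q P -> clos_refl_trans point e p q.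

(* Main.v *)
Require Import Defs.
From Stdlib Require Import Reals List Relations Lra Lia Classical Wf_nat Arith.
Open Scope R_scope.
Definition Sd wa ua va wb ub vb := 2*Rmax wa wb - Rmin ua ub - Rmin va vb.
Definition Su wa ua va wb ub vb := Rmax ua ub + Rmax va vb - 2*Rmin wa wb.

Lemma key_down wp up vp wq uq vq wr ur vr :
  up+vp=2*wp -> uq+vq = 2*wq -> ur+vr=2*wr -> wr <> wq -> ur <> uq -> vr <> vq ->
  wr <= Rmax wp wq -> Rmin up uq <= ur -> Rmin vp vq <= vr ->
  Sd wp up vp wr ur vr < Sd wp up vp wq uq vq.
Proof.
  intros E1 E2 E3 N1 N2 N3 H1 H2 H3. unfold Sd in *.
  destruct (Rtotal_order wr wq) as [A|[A|A]]; [|congruence|];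
  destruct (Rtotal_order ur uq) as [B|[B|B]]; try congruence;
  destruct (Rtotal_order vr vq) as [C|[C|C]]; try congruence;
  unfold Rmax, Rmin in *;
  repeat match goal with |- context [Rle_dec ?a ?b] => destruct (Rle_dec a b) end;
  repeat match goal with H: context [Rle_dec ?a ?b] |- _ => destruct (Rle_dec a b) end;
  lra.
Qed.

Lemma key_up wp up vp wq uq vq wr ur vr :
  up+vp=2*wp -> uq+vq = 2*wq -> ur+vr=2*wr -> wr <> wq -> ur <> uq -> vr <> vq ->
  Rmin wp wq <= wr -> ur <= Rmax up uq -> vr <= Rmax vp vq ->
  Su wp up vp wr ur vr < Su wp up vp wq uq vq.
Proof.
  intros E1 E2 E3 N1 N2 N3 H1 H2 H3. unfold Su in *.
  destruct (Rtotal_order wr wq) as [A|[A|A]]; [|congruence|];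
  destruct (Rtotal_order ur uq) as [B|[B|B]]; try congruence;
  destruct (Rtotal_order vr vq) as [C|[C|C]]; try congruence;
  unfold Rmax, Rmin in *;
  repeat match goal with |- context [Rle_dec ?a ?b] => destruct (Rle_dec a b) end;
  repeat match goal with H: context [Rle_dec ?a ?b] |- _ => destruct (Rle_dec a b) end;
  lra.
Qed.

Lemma Sd_Su wa ua va wb ub vb : ua+va=2*wa -> ub+vb=2*wb ->
  Sd wa ua va wb ub vb = Su wa ua va wb ub vb.
Proof. intros. unfold Sd, Su, Rmax, Rmin;
  repeat match goal with |- context [Rle_dec ?a ?b] => destruct (Rle_dec a b) end; lra. Qed.

Definition s := sqrt 3.
Lemma s_pos : 0 < s. Proof. unfold s; apply sqrt_lt_R0; lra. Qed.
Definition W (a : point) := snd a.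
Definition U (a : point) := snd a - s * fst a.
Definition V (a : point) := snd a + s * fst a.
Lemma UV a : U a + V a = 2 * W a. Proof. unfold U, V, W; ring. Qed.

Lemma gp_ne P a b : general_position P -> In a P -> In b P -> a <> b ->
  W b <> W a /\ U b <> U a /\ V b <> V a.
Proof.
  intros G Ha Hb Hab. destruct (G a b Ha Hb Hab) as [A [B C]].
  unfold W, U, V, s in *. repeat split; intro E; lra.
Qed.

Lemma in_down_iff x0 y0 h r : in_down_triangle x0 y0 h r <->
  W r <= y0 + h /\ y0 - s * x0 <= U r /\ y0 + s * x0 <= V r.
Proof.
  unfold in_down_triangle, W, U, V, s. pose proof s_pos as P; unfold s in P.
  unfold Rabs; destruct (Rcase_abs (fst r - x0)); split;
  [intros [A B]; repeat split; nra | intros [A [B C]]; split; nra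
  |intros [A B]; repeat split; nra | intros [A [B C]]; split; nra].
Qed.

Lemma in_up_iff x0 y0 h r : in_up_triangle x0 y0 h r <->
  y0 - h <= W r /\ U r <= y0 - s * x0 /\ V r <= y0 + s * x0.
Proof.
  unfold in_up_triangle, W, U, V, s. pose proof s_pos as P; unfold s in P.
  unfold Rabs; destruct (Rcase_abs (fst r - x0)); split;
  [intros [A B]; repeat split; nra | intros [A [B C]]; split; nra
  |intros [A B]; repeat split; nra | intros [A [B C]]; split; nra].
Qed.

Definition M (a b : point) := Sd (W a) (U a) (V a) (W b) (U b) (V b).

Lemma M_sym a b : M a b = M b a.
Proof. unfold M, Sd. rewrite Rmax_comm, (Rmin_comm (U a)), (Rmin_comm (V a)). ring. Qed.

Lemma sx0 A B : s * ((A - B) / (2 * s)) = (A - B) / 2.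
Proof. pose proof s_pos. field. lra. Qed.

Lemma not_down P p q : general_position P -> In p P -> In q P -> p <> q ->
  ~ G_down_adj P p q ->
  exists r, In r P /\ r <> p /\ r <> q /\ M p r < M p q /\ M r q < M p q.
Proof.
  intros G Hp Hq Hpq ND.
  destruct (classic (exists r, In r P /\ r <> p /\ r <> q /\
     W r <= Rmax (W p) (W q) /\ Rmin (U p) (U q) <= U r /\ Rmin (V p) (V q) <= V r))
   as [[r [Hr [Rp [Rq [H1 [H2 H3]]]]]] | NE].
  - exists r. destruct (gp_ne P q r G Hq Hr (not_eq_sym Rq)) as [A1 [A2 A3]].
    destruct (gp_ne P p r G Hp Hr (not_eq_sym Rp)) as [B1 [B2 B3]].
    split; [exact Hr|split; [exact Rp|split; [exact Rq|split]]].
    + unfold M. apply key_down; try apply UV; assumption.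
    + rewrite (M_sym r q), (M_sym p q). unfold M. apply key_down; try apply UV; try assumption.
      rewrite Rmax_comm; exact H1. rewrite Rmin_comm; exact H2. rewrite Rmin_comm; exact H3.
  - exfalso. apply ND. split; [exact Hp|split; [exact Hq|split; [exact Hpq|]]].
    set (A := Rmax (W p) (W q)). set (B := Rmin (U p) (U q)). set (C := Rmin (V p) (V q)).
    exists ((C - B) / (2 * s)), ((B + C) / 2), (A - (B + C) / 2).
    pose proof (sx0 C B) as SX.
    destruct (gp_ne P p q G Hp Hq Hpq) as [A1 [A2 A3]].
    pose proof (UV p). pose proof (UV q).
    assert (HA1 : W p <= A) by apply Rmax_l. assert (HA2 : W q <= A) by apply Rmax_r.
    assert (HB1 : B <= U p) by apply Rmin_l. assert (HB2 : B <= U q) by apply Rmin_r.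
    assert (HC1 : C <= V p) by apply Rmin_l. assert (HC2 : C <= V q) by apply Rmin_r.
    split; [|split; [|split]].
    + destruct (Rle_lt_dec A ((B+C)/2)); [|lra]. exfalso.
      apply A1. lra.
    + apply in_down_iff. rewrite SX. repeat split; lra.
    + apply in_down_iff. rewrite SX. repeat split; lra.
    + intros r Hr Hin. apply in_down_iff in Hin. rewrite SX in Hin.
      destruct (classic (r = p)) as [|Rp]; [now left|].
      destruct (classic (r = q)) as [|Rq]; [now right|].
      exfalso. apply NE. exists r. split; [assumption|split; [assumption|split; [assumption|]]]. fold A B C. repeat split; lra.
Qed.

Lemma not_up P p q : general_position P -> In p P -> In q P -> p <> q ->
  ~ G_up_adj P p q ->
  exists r, In r P /\ r <> p /\ r <> q /\ M p r < M p q /\ M r q < M p q.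
Proof.
  intros G Hp Hq Hpq ND.
  destruct (classic (exists r, In r P /\ r <> p /\ r <> q /\
     Rmin (W p) (W q) <= W r /\ U r <= Rmax (U p) (U q) /\ V r <= Rmax (V p) (V q)))
   as [[r [Hr [Rp [Rq [H1 [H2 H3]]]]]] | NE].
  - exists r. destruct (gp_ne P q r G Hq Hr (not_eq_sym Rq)) as [A1 [A2 A3]].
    destruct (gp_ne P p r G Hp Hr (not_eq_sym Rp)) as [B1 [B2 B3]].
    split; [exact Hr|split; [exact Rp|split; [exact Rq|split]]].
    + unfold M. rewrite !Sd_Su by apply UV. apply key_up; try apply UV; assumption.
    + rewrite (M_sym r q), (M_sym p q). unfold M. rewrite !Sd_Su by apply UV.
      apply key_up; try apply UV; try assumption.
      rewrite Rmin_comm; exact H1. rewrite Rmax_comm; exact H2. rewrite Rmax_comm; exact H3.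
  - exfalso. apply ND. split; [exact Hp|split; [exact Hq|split; [exact Hpq|]]].
    set (A := Rmin (W p) (W q)). set (B := Rmax (U p) (U q)). set (C := Rmax (V p) (V q)).
    exists ((C - B) / (2 * s)), ((B + C) / 2), ((B + C) / 2 - A).
    pose proof (sx0 C B) as SX.
    destruct (gp_ne P p q G Hp Hq Hpq) as [A1 [A2 A3]].
    pose proof (UV p). pose proof (UV q).
    assert (HA1 : A <= W p) by apply Rmin_l. assert (HA2 : A <= W q) by apply Rmin_r.
    assert (HB1 : U p <= B) by apply Rmax_l. assert (HB2 : U q <= B) by apply Rmax_r.
    assert (HC1 : V p <= C) by apply Rmax_l. assert (HC2 : V q <= C) by apply Rmax_r.
    split; [|split; [|split]].
    + destruct (Rle_lt_dec ((B+C)/2) A); [|lra]. exfalso.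
      apply A1. lra.
    + apply in_up_iff. rewrite SX. repeat split; lra.
    + apply in_up_iff. rewrite SX. repeat split; lra.
    + intros r Hr Hin. apply in_up_iff in Hin. rewrite SX in Hin.
      destruct (classic (r = p)) as [|Rp]; [now left|].
      destruct (classic (r = q)) as [|Rq]; [now right|].
      exfalso. apply NE. exists r. split; [assumption|split; [assumption|split; [assumption|]]]. fold A B C. repeat split; try assumption; lra.
Qed.

Fixpoint cnt (L : list (point * point)) (x : R) : nat :=
  match L with
  | nil => 0
  | ab :: L' => ((if Rlt_dec (M (fst ab) (snd ab)) x then 1 else 0) + cnt L' x)%nat
  end.

Lemma cnt_mono L x y : y <= x -> (cnt L y <= cnt L x)%nat.
Proof.
  intros H; induction L as [|ab L IH]; simpl; [lia|].
  destruct (Rlt_dec (M (fst ab) (snd ab)) y); destruct (Rlt_dec (M (fst ab) (snd ab)) x);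
  try lia; lra.
Qed.

Lemma cnt_strict L a b x : M a b < x -> In (a, b) L -> (cnt L (M a b) < cnt L x)%nat.
Proof.
  intros H; induction L as [|ab L IH]; simpl; [tauto|]. intros [E|I].
  - subst ab; simpl. destruct (Rlt_dec (M a b) (M a b)); [lra|].
    destruct (Rlt_dec (M a b) x); [|lra]. pose proof (cnt_mono L x (M a b) (Rlt_le _ _ H)). lia.
  - specialize (IH I).
    destruct (Rlt_dec (M (fst ab) (snd ab)) (M a b)); destruct (Rlt_dec (M (fst ab) (snd ab)) x);
    try lia; lra.
Qed.

Theorem lemma8 (P : list point) :
  NoDup P -> general_position P -> graph_connected P (G_cap_adj P).
Proof.
  intros _ G. set (L := list_prod P P).
  assert (Main : forall n p q, n = cnt L (M p q) -> In p P -> In q P ->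
            clos_refl_trans point (G_cap_adj P) p q).
  { intro n. induction n as [n IH] using lt_wf_ind. intros p q En Hp Hq.
    destruct (classic (p = q)) as [E|Hpq]; [subst; apply rt_refl|].
    destruct (classic (G_cap_adj P p q)) as [Hc|Hc]; [now apply rt_step|].
    assert (Ex : exists r, In r P /\ r <> p /\ r <> q /\ M p r < M p q /\ M r q < M p q).
    { destruct (classic (G_down_adj P p q)) as [D|D].
      - apply not_up; try assumption. intro Uq. apply Hc; split; assumption.
      - apply not_down; assumption. }
    destruct Ex as [r [Hr [_ [_ [L1 L2]]]]].
    apply rt_trans with r.
    + apply (IH (cnt L (M p r))); [|reflexivity|assumption|assumption].
      subst n. apply cnt_strict; [exact L1|]. apply in_prod; assumption.
    + apply (IH (cnt L (M r q))); [|reflexivity|assumption|assumption].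
      subst n. apply cnt_strict; [exact L2|]. apply in_prod; assumption. }
  intros p q Hp Hq. exact (Main _ p q eq_refl Hp Hq).
Qed.
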